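(* Let $A$ and $B$ be automata such that $B$ is deterministic and $A\le_{*T}B$. Then $A\le_F B$.
   Context: An automaton $A$ consists of a set $\mathrm{states}(A)$ of states, a nonempty set $\mathrm{start}(A)\subseteq\mathrm{states}(A)$ of start states, a set $\mathrm{acts}(A)$ of actions containing a distinguished internal action $\tau$, and a set $\mathrm{steps}(A)\subseteq\mathrm{states}(A)\times\mathrm{acts}(A)\times\mathrm{states}(A)$ of steps; write $s\xrightarrow{a}_A t$ for $(s,a,t)\in\mathrm{steps}(A)$. An execution fragment of $A$ is a finite or infinite alternating sequence $s_0a_1s_1a_2s_2\cdots$ of states and actions, beginning with a state and, if finite, ending with a state, such that $s_{i-1}\xrightarrow{a_i}_A s_i$ for all $i>0$. An execution is an execution fragment whose first state is a start state. The trace of an execution fragment is the subsequence of its non-$\tau$ actions; a trace of $A$ is the trace of some execution of $A$, and $\mathrm{traces}^*(A)$ is the set of finite traces of $A$. $A\le_{*T}B$ means $\mathrm{traces}^*(A)\subseteq\mathrm{traces}^*(B)$. For states $s,t$ and a finite sequence $\beta$ of non-$\tau$ actions, write $s\stackrel{\beta}{\Rightarrow}_A t$ if $A$ has a finite execution fragment starting in $s$, with trace $\beta$, ending in $t$. $A$ is deterministic if $|\mathrm{start}(A)|=1$ and for every state $s$ and finite sequence $\beta$ of non-$\tau$ actions there is at most one $t$ with $s\stackrel{\beta}{\Rightarrow}_A t$. For a relation $R$ write $R[s]=\{u\mid (s,u)\in R\}$. A normed forward simulation from $A$ to $B$ is a pair $(f,n)$ where $f\subseteq\mathrm{states}(A)\times\mathrm{states}(B)$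 and $n:\mathrm{steps}(A)\times\mathrm{states}(B)\to S$ for some set $S$ with a well-founded strict order $<$, such that: (1) if $s\in\mathrm{start}(A)$ then $f[s]\cap\mathrm{start}(B)\neq\emptyset$; (2) if $s\xrightarrow{a}_A t$ and $u\in f[s]$ then (a) $u\in f[t]$ and $a=\tau$, or (b) there is $v\in f[t]$ with $u\xrightarrow{a}_B v$, or (c) there is $v\in f[s]$ with $u\xrightarrow{\tau}_B v$ and $n(s\xrightarrow{a}t,v)<n(s\xrightarrow{a}t,u)$. Write $A\le_F B$ if one exists. *)

(* Defs.v *)
From Stdlib Require Import List Relations Wellfounded RelationClasses.
Import ListNotations.

Record automaton (Act : Type) (tau : Act) := {
  state : Type;
  start : state -> Prop;
  acts : Act -> Prop;
  step : state -> Act -> state -> Prop;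
  start_nonempty : exists s, start s;
  tau_in_acts : acts tau;
  step_acts : forall s a t, step s a t -> acts a
}.
Arguments state {Act tau} _.
Arguments start {Act tau} _ _.
Arguments acts {Act tau} _ _.
Arguments step {Act tau} _ _ _ _.

Inductive frag {Act : Type} {tau : Act} (A : automaton Act tau)
  : state A -> list Act -> state A -> Prop :=
| frag_nil : forall s, frag A s [] s
| frag_tau : forall s u beta t,
    step A s tau u -> frag A u beta t -> frag A s beta t
| frag_vis : forall s a u beta t,
    a <> tau -> step A s a u -> frag A u beta t -> frag A s (a :: beta) t.

Definition ftrace {Act : Type} {tau : Act} (A : automaton Act tau)
  (beta : list Act) : Prop :=
  exists s t, start A s /\ frag A s beta t.

Definition ftrace_incl {Act : Type} {tau : Act} (A B : automaton Act tau) : Prop :=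
  forall beta, ftrace A beta -> ftrace B beta.

Definition deterministic {Act : Type} {tau : Act} (A : automaton Act tau) : Prop :=
  (exists s0, forall s, start A s <-> s = s0) /\
  forall s beta t1 t2,
    Forall (fun a => a <> tau) beta ->
    frag A s beta t1 -> frag A s beta t2 -> t1 = t2.

Definition normed_fsim {Act : Type} {tau : Act} (A B : automaton Act tau)
  (S : Type) (lt : S -> S -> Prop)
  (f : state A -> state B -> Prop)
  (n : state A -> Act -> state A -> state B -> S) : Prop :=
  (forall s, start A s -> exists u, f s u /\ start B u) /\
  (forall s a t u, step A s a t -> f s u ->
     (f t u /\ a = tau) \/
     (exists v, f t v /\ step B u a v) \/
     (exists v, f s v /\ step B u tau v /\ lt (n s a t v) (n s a t u))).

Definition fsim_le {Act : Type} {tau : Act} (A B : automaton Act tau) : Prop :=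
  exists (S : Type) (lt : S -> S -> Prop)
         (f : state A -> state B -> Prop)
         (n : state A -> Act -> state A -> state B -> S),
    StrictOrder lt /\ well_founded lt /\ normed_fsim A B S lt f n.

(* Main.v *)
Require Import Defs.
From Stdlib Require Import List Relations Wellfounded RelationClasses Arith Lia ClassicalEpsilon Classical.
Import ListNotations.

Section S.
Context {Act : Type} {tau : Act}.

Inductive tpath (B : automaton Act tau) : state B -> nat -> state B -> Prop :=
| tp0 : forall u, tpath B u 0 u
| tpS : forall u v k y, step B u tau v -> tpath B v k y -> tpath B u (S k) y.

Lemma frag_forall (B : automaton Act tau) s beta t :
  frag B s beta t -> Forall (fun a => a <> tau) beta.
Proof. induction 1; auto. Qed.

Lemma frag_app (B : automaton Act tau) s b1 m b2 t :
  frag B s b1 m -> frag B m b2 t -> frag B s (b1 ++ b2) t.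
Proof. induction 1; intros; simpl; eauto using frag. Qed.

Lemma frag_split (B : automaton Act tau) x b1 b2 w :
  frag B x (b1 ++ b2) w -> exists m, frag B x b1 m /\ frag B m b2 w.
Proof.
  remember (b1 ++ b2) as l eqn:E. intros H. revert b1 E.
  induction H; intros b1 E.
  - destruct b1; [|discriminate]. simpl in E; subst. eexists; split; constructor.
  - destruct (IHfrag b1 E) as [m [H1 H2]]. exists m; split; eauto using frag.
  - destruct b1 as [|c b1].
    + simpl in E; subst. exists s; split; [constructor|eauto using frag].
    + simpl in E; injection E; intros; subst.
      destruct (IHfrag b1 eq_refl) as [m [H2 H3]]. exists m; split; eauto using frag.
Qed.

Lemma frag_single (B : automaton Act tau) x a w :
  frag B x [a] w -> exists k y z, tpath B x k y /\ step B y a z /\ frag B z [] w.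
Proof.
  remember [a] as l eqn:E. intros H. induction H.
  - discriminate.
  - destruct (IHfrag E) as [k [y [z [H1 [H2 H3]]]]].
    exists (S k), y, z; repeat split; eauto using tpath.
  - injection E; intros; subst. exists 0, s, u. split; [constructor|]. split; assumption.
Qed.

Lemma tpath_frag (B : automaton Act tau) x k y : tpath B x k y -> frag B x [] y.
Proof. induction 1; eauto using frag. Qed.

Lemma tpath_frag_a (B : automaton Act tau) x k y a z :
  a <> tau -> tpath B x k y -> step B y a z -> frag B x [a] z.
Proof. intros Ha H. induction H; intros; eauto using frag. Qed.

End S.

Theorem mainTheorem5 (Act : Type) (tau : Act) (A B : automaton Act tau) :
  deterministic B -> ftrace_incl A B -> fsim_le A B.
Proof.
  intros [[u0 Hu0] Hdet] Hincl.
  set (f := fun (s : state A) (u : state B) => exists beta s0,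
        start A s0 /\ frag A s0 beta s /\ start B u0 /\ frag B u0 beta u).
  set (P := fun (a : Act) (t : state A) (u : state B) (k : nat) =>
        exists y z, tpath B u k y /\ step B y a z /\ f t z).
  set (n := fun (s : state A) (a : Act) (t : state A) (u : state B) =>
        epsilon (inhabits 0) (fun k => P a t u k /\ forall j, P a t u j -> k <= j)).
  assert (Hmin : forall a t u, (exists k, P a t u k) ->
     exists k, P a t u k /\ forall j, P a t u j -> k <= j).
  { intros a t u [k Hk]. induction k as [k IH] using lt_wf_ind.
    destruct (classic (exists j, P a t u j /\ j < k)) as [[j [Hj Hjk]]|Hno].
    - eapply IH; eauto.
    - exists k; split; auto. intros j Hj. destruct (le_lt_dec k j); auto.
      exfalso; apply Hno; eauto. }
  assert (Hn : forall s a t u, (exists k, P a t u k) ->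
     P a t u (n s a t u) /\ forall j, P a t u j -> n s a t u <= j).
  { intros. unfold n. apply (epsilon_spec (inhabits 0)
      (fun k => P a t u k /\ forall j, P a t u j -> k <= j)). auto. }
  exists nat, lt, f, n. split; [exact Nat.lt_strorder|]. split; [exact lt_wf|].
  split.
  - assert (Hs0 : start B u0) by (apply (Hu0 u0); reflexivity).
    intros s Hs. exists u0. split; [|exact Hs0].
    exists [], s. split; [exact Hs|]. split; [constructor|]. split; [exact Hs0|constructor].
  - intros s a t u Hst [beta [s0 [Hs0 [Hfa [Hu0' Hfb]]]]].
    destruct (classic (a = tau)) as [Ha|Ha].
    + left. split; auto. exists beta, s0. repeat split; auto.
      subst a. rewrite <- (app_nil_r beta). eapply frag_app; eauto using frag.
    + right.
      assert (Hex : exists k, P a t u k).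
      { assert (HA : ftrace A (beta ++ [a])).
        { exists s0, t. split; auto. eapply frag_app; eauto.
          eapply frag_vis; eauto using frag. }
        destruct (Hincl _ HA) as [v0 [w [Hv0 Hw]]].
        apply Hu0 in Hv0; subst v0.
        destruct (frag_split _ _ _ _ _ Hw) as [m [Hm1 Hm2]].
        assert (m = u) by (exact (Hdet u0 beta m u (frag_forall _ _ _ _ Hfb) Hm1 Hfb)). subst m.
        destruct (frag_single _ _ _ _ Hm2) as [k [y [z [H1 [H2 H3]]]]].
        exists k, y, z. repeat split; auto.
        exists (beta ++ [a]), s0. repeat split; auto.
        - eapply frag_app; eauto. eapply frag_vis; eauto using frag.
        - eapply frag_app; eauto. eapply tpath_frag_a; eauto. }
      destruct (Hn s a t u Hex) as [[y [z [Hp [Hy Hz]]]] Hle].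
      inversion Hp; subst.
      * left. exists z. split; auto.
      * right. exists v. split.
        -- exists beta, s0. repeat split; auto.
           rewrite <- (app_nil_r beta). eapply frag_app; eauto using frag.
        -- split; auto.
           assert (HPv : P a t v k) by (exists y, z; auto).
           destruct (Hn s a t v (ex_intro _ k HPv)) as [_ Hle'].
           specialize (Hle' k HPv). lia.
Qed.
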